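(* Let $I=\{1,\dots,m\}$, $J=\{1,\dots,n\}$, let $b\in\mathbb{R}^m$, let $\hat{x}\in\mathbb{R}^n$ with $\hat{x}\neq 0$, let $\hat{a}_i\in\mathbb{R}^n$ ($i\in I$) be given prior vectors, let $\xi\in\mathbb{R}^m$ be a vector of real-valued weights, and let $\|\cdot\|$ be a norm on $\mathbb{R}^n$. Consider the problem NLO-SD: \[ \min_{A,c,\pi}\ \sum_{i\in I}\xi_i\|a_i-\hat{a}_i\| \] subject to $\sum_{j\in J}c_j\hat{x}_j-\sum_{i\in I}b_i\pi_i=0$; $\sum_{j\in J}a_{ij}\hat{x}_j\ge b_i$ for all $i\in I$; $\sum_{i\in I}\pi_i=1$; $\sum_{i\in I}a_{ij}\pi_i=c_j$ for all $j\in J$; $\pi_i\ge0$ for all $i\in I$. Let $\|\hat{x}\|^*=\max_{\|v\|=1}\hat{x}^\top v$ be the dual norm and let $v(\hat{x})\in\arg\max_{\|v\|=1}\hat{x}^\top v$. For each $i\in I$ define \[ f_i=\frac{\xi_i|\hat{a}_i^\top\hat{x}-b_i|}{\|\hat{x}\|^*},\qquad a^f_i=\hat{a}_i-\frac{\hat{a}_i^\top\hat{x}-b_i}{\|\hat{x}\|^*}v(\hat{x}), \] $g_i=f_i$ and $a^g_i=a^f_i$ if $\hat{a}_i^\top\hat{x}<b_i$, and $g_i=0$ and $a^g_i=\hat{a}_i$ otherwise. Let $i^*\in\arg\min_{i\in I}\{f_i-g_i\}$. Then the optimal value of NLO-SD is $f_{i^*}+\sum_{i\in I\setminus\{i^*\}}g_i$,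 and an optimal solution $(A,c,\pi)$ is given by $a_{i^*}=a^f_{i^*}$, $a_i=a^g_i$ for $i\in I\setminus\{i^*\}$, $c=a_{i^*}$, $\pi=e_{i^*}$. Moreover, if $b_i\neq0$ and $\hat{a}_i\neq0$ for all $i\in I$, then this solution satisfies $c\neq0$ and $a_i\neq0$ for all $i\in I$.
   Context: $a_i$ denotes the $i$-th row of $A=(a_{ij})\in\mathbb{R}^{m\times n}$, $c\in\mathbb{R}^n$, $\pi\in\mathbb{R}^m$, and $e_i$ denotes the $i$-th unit vector of $\mathbb{R}^m$. *)

(* Defs.v *)
From HB Require Import structures.
From mathcomp Require Import all_boot all_order all_algebra.
Set Implicit Arguments. Unset Strict Implicit. Unset Printing Implicit Defensive.
Import Order.TTheory GRing.Theory Num.Theory.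
Local Open Scope ring_scope.

Section NLOSD.
Variables (R : realFieldType) (m n : nat).

Definition dotv (u v : 'rV[R]_n) : R := \sum_(j < n) u 0 j * v 0 j.

Definition is_norm (N : 'rV[R]_n -> R) : Prop :=
  [/\ forall x, N x = 0 -> x = 0,
      forall (a : R) x, N (a *: x) = `|a| * N x
    & forall x y, N (x + y) <= N x + N y].

Definition is_dual_argmax (N : 'rV[R]_n -> R) (xhat v : 'rV[R]_n) : Prop :=
  N v = 1 /\ forall w, N w = 1 -> dotv xhat w <= dotv xhat v.

(* the dual norm value ||xhat||^* = max_{||w||=1} xhat^T w, given the maximizer v *)
Definition dualnorm_at (xhat v : 'rV[R]_n) : R := dotv xhat v.

Definition nlosd_feasible (b : 'I_m -> R) (xhat : 'rV[R]_n)
  (A : 'M[R]_(m, n)) (c : 'rV[R]_n) (pi : 'I_m -> R) : Prop :=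
  [/\ \sum_(j < n) c 0 j * xhat 0 j - \sum_(i < m) b i * pi i = 0,
      forall i : 'I_m, \sum_(j < n) A i j * xhat 0 j >= b i,
      \sum_(i < m) pi i = 1,
      forall j : 'I_n, \sum_(i < m) A i j * pi i = c 0 j
    & forall i : 'I_m, 0 <= pi i].

Definition nlosd_obj (N : 'rV[R]_n -> R) (xi : 'I_m -> R) (Ahat A : 'M[R]_(m, n)) : R :=
  \sum_(i < m) xi i * N (row i A - row i Ahat).

Definition f_val (xi b : 'I_m -> R) (Ahat : 'M[R]_(m, n)) (xhat v : 'rV[R]_n) (i : 'I_m) : R :=
  xi i * `|dotv (row i Ahat) xhat - b i| / dualnorm_at xhat v.

Definition a_f (b : 'I_m -> R) (Ahat : 'M[R]_(m, n)) (xhat v : 'rV[R]_n) (i : 'I_m) : 'rV[R]_n :=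
  row i Ahat - ((dotv (row i Ahat) xhat - b i) / dualnorm_at xhat v) *: v.

Definition g_val (xi b : 'I_m -> R) (Ahat : 'M[R]_(m, n)) (xhat v : 'rV[R]_n) (i : 'I_m) : R :=
  if dotv (row i Ahat) xhat < b i then f_val xi b Ahat xhat v i else 0.

Definition a_g (b : 'I_m -> R) (Ahat : 'M[R]_(m, n)) (xhat v : 'rV[R]_n) (i : 'I_m) : 'rV[R]_n :=
  if dotv (row i Ahat) xhat < b i then a_f b Ahat xhat v i else row i Ahat.

Definition A_star (b : 'I_m -> R) (Ahat : 'M[R]_(m, n)) (xhat v : 'rV[R]_n) (istar : 'I_m)
  : 'M[R]_(m, n) :=
  \matrix_(i < m) (if i == istar then a_f b Ahat xhat v i else a_g b Ahat xhat v i).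

Definition pi_star (istar : 'I_m) : 'I_m -> R := fun i => (i == istar)%:R.

End NLOSD.

(* Main.v *)
Require Import Defs.
From HB Require Import structures.
From mathcomp Require Import all_boot all_order all_algebra.
From mathcomp Require Import ring lra.
Import Order.TTheory GRing.Theory Num.Theory.
Local Open Scope ring_scope.

Section H.
Variables (R : realFieldType) (n : nat) (N : 'rV[R]_n -> R).
Hypothesis hN : is_norm N.
Implicit Types (u w x y z : 'rV[R]_n) (a : R).

Lemma nN0 : N 0 = 0.
Proof. case: hN => _ hs _. by rewrite -(scale0r 0) hs normr0 mul0r. Qed.

Lemma nNN x : N (- x) = N x.
Proof. case: hN => _ hs _. by rewrite -scaleN1r hs normrN normr1 mul1r. Qed.

Lemma nN_ge0 x : 0 <= N x.
Proof.
case: hN => _ _ ht. have := ht x (- x). rewrite subrr nN0 nNN. lra.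
Qed.

Lemma nN_gt0 x : x != 0 -> 0 < N x.
Proof.
case: hN => h0 _ _ => hx. rewrite lt_def nN_ge0 andbT.
apply/eqP => /h0 e. by rewrite e eqxx in hx.
Qed.

Lemma dotvC u w : dotv u w = dotv w u.
Proof. rewrite /dotv; apply: eq_bigr => j _; by rewrite mulrC. Qed.

Lemma dotvBl u w x : dotv (u - w) x = dotv u x - dotv w x.
Proof. rewrite /dotv -sumrB; apply: eq_bigr => j _; rewrite !mxE; ring. Qed.

Lemma dotvZl a u x : dotv (a *: u) x = a * dotv u x.
Proof. rewrite /dotv mulr_sumr; apply: eq_bigr => j _; rewrite !mxE; ring. Qed.

Lemma dotvZr a u x : dotv x (a *: u) = a * dotv x u.
Proof. by rewrite dotvC dotvZl dotvC. Qed.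

Lemma dotv0r x : dotv x 0 = 0.
Proof. rewrite /dotv big1 // => j _; by rewrite mxE mulr0. Qed.

Lemma dotv_self_gt0 x : x != 0 -> 0 < dotv x x.
Proof.
move=> hx; rewrite lt_def; apply/andP; split; last first.
  by apply: sumr_ge0 => j _; rewrite -expr2 sqr_ge0.
apply/eqP => h; move/eqP: hx; apply; apply/rowP => j.
have := psumr_eq0P (fun j _ => (sqr_ge0 (x 0 j) : 0 <= x 0 j * x 0 j)) h (isT : predT j).
rewrite mxE.
move=> hh; have /eqP := hh j; rewrite mulf_eq0 orbb; by move/eqP.
Qed.

Variables (xhat v : 'rV[R]_n).
Hypothesis hv : is_dual_argmax N xhat v.

Lemma holder y : dotv xhat y <= dotv xhat v * N y.
Proof.
case: hv => hv1 hmax.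
have [->|hy] := eqVneq y 0; first by rewrite dotv0r nN0 mulr0.
have hNy := nN_gt0 _ hy.
have hw : N ((N y)^-1 *: y) = 1.
  case: hN => _ hs _; rewrite hs ger0_norm ?invr_ge0 ?ltW // mulVf //.
  by rewrite gt_eqF.
have := hmax _ hw; rewrite dotvZr.
rewrite ler_pdivrMl // => h. by rewrite mulrC.
Qed.

Lemma d_gt0 : xhat != 0 -> 0 < dotv xhat v.
Proof.
move=> hx. have h := holder xhat.
have h1 := dotv_self_gt0 _ hx. have h2 := nN_gt0 _ hx.
rewrite -(pmulr_lgt0 _ h2). exact: lt_le_trans h1 h.
Qed.

Lemma holder_abs y : `|dotv xhat y| <= dotv xhat v * N y.
Proof.
rewrite ler_norml holder andbT.
have := holder (- y). rewrite nNN.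
have -> : dotv xhat (- y) = - dotv xhat y.
  by rewrite -scaleN1r dotvZr mulN1r.
lra.
Qed.

Lemma sum_pi (m : nat) (F : 'I_m -> R) (s : 'I_m) :
  \sum_(i < m) F i * (i == s)%:R = F s.
Proof.
rewrite (bigD1 s) //= eqxx mulr1 big1 ?addr0 // => i /negbTE ->; by rewrite mulr0.
Qed.

Variables (m : nat) (b xi : 'I_m -> R) (Ahat : 'M[R]_(m, n)).
Hypothesis hx : xhat != 0.
Hypothesis hxi : forall i, 0 <= xi i.

Lemma dot_af i : dotv (a_f b Ahat xhat v i) xhat = b i.
Proof.
have hd := d_gt0 hx.
rewrite /a_f dotvBl dotvZl (dotvC v) /dualnorm_at.
field. by rewrite gt_eqF.
Qed.

Lemma f_le i z : `|dotv (row i Ahat) xhat - b i| <= dotv xhat v * N z ->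
  f_val xi b Ahat xhat v i <= xi i * N z.
Proof.
move=> h; have hd := d_gt0 hx.
rewrite /f_val /dualnorm_at -mulrA; apply: ler_wpM2l => //.
by rewrite ler_pdivrMr // mulrC.
Qed.

Lemma key i z : `|dotv z xhat - dotv (row i Ahat) xhat| <= dotv xhat v * N (z - row i Ahat).
Proof. by rewrite -dotvBl dotvC holder_abs. Qed.

Lemma lb_f z i : dotv z xhat = b i -> f_val xi b Ahat xhat v i <= xi i * N (z - row i Ahat).
Proof. move=> e; apply: f_le; by rewrite distrC -e key. Qed.

Lemma lb_g z i : b i <= dotv z xhat -> g_val xi b Ahat xhat v i <= xi i * N (z - row i Ahat).
Proof.
move=> e; rewrite /g_val; case: ifP => h.
  apply: f_le; apply: le_trans (key i z).
  rewrite ltr0_norm ?subr_lt0 //; apply: le_trans (ler_norm _). lra.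
by apply: mulr_ge0 => //; apply: nN_ge0.
Qed.

Lemma obj_af i : xi i * N (a_f b Ahat xhat v i - row i Ahat) = f_val xi b Ahat xhat v i.
Proof.
have hd := d_gt0 hx. case: (hN) => _ hs _. case: hv => hv1 _.
rewrite /a_f addrAC subrr add0r nNN hs hv1 mulr1 /f_val /dualnorm_at.
by rewrite normrM normfV (gtr0_norm hd) mulrA.
Qed.
End H.

Theorem theorem2 (R : realFieldType) (m n : nat)
  (b xi : 'I_m -> R) (xhat : 'rV[R]_n) (Ahat : 'M[R]_(m, n))
  (N : 'rV[R]_n -> R) (v : 'rV[R]_n) (istar : 'I_m) :
  is_norm N ->
  xhat != 0 ->
  (forall i, 0 <= xi i) ->
  is_dual_argmax N xhat v ->
  (forall i, f_val xi b Ahat xhat v istar - g_val xi b Ahat xhat v istar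
             <= f_val xi b Ahat xhat v i - g_val xi b Ahat xhat v i) ->
  let V := f_val xi b Ahat xhat v istar
           + \sum_(i < m | i != istar) g_val xi b Ahat xhat v i in
  let Astar := A_star b Ahat xhat v istar in
  let cstar := a_f b Ahat xhat v istar in
  [/\ nlosd_feasible b xhat Astar cstar (pi_star R istar),
      nlosd_obj N xi Ahat Astar = V,
      (forall A c pi, nlosd_feasible b xhat A c pi -> V <= nlosd_obj N xi Ahat A)
    & ((forall i, b i != 0) -> (forall i, row i Ahat != 0) ->
       cstar != 0 /\ forall i, row i Astar != 0)].
Proof.
move=> hN hx hxi hv hmin V Astar cstar.
have Daf := @dot_af _ _ _ hN _ _ hv _ b Ahat hx.
have Oaf := @obj_af _ _ _ hN _ _ hv _ b xi Ahat hx.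
have Lf := @lb_f _ _ _ hN _ _ hv _ b xi Ahat hx hxi.
have Lg := @lb_g _ _ _ hN _ _ hv _ b xi Ahat hx hxi.
have rowA i : row i Astar = if i == istar then a_f b Ahat xhat v i else a_g b Ahat xhat v i.
  by rewrite /Astar /A_star rowK.
have sumdot (A : 'M[R]_(m, n)) i : \sum_(j < n) A i j * xhat 0 j = dotv (row i A) xhat.
  by rewrite /dotv; apply: eq_bigr => j _; rewrite mxE.
split.
- split.
  + rewrite /pi_star sum_pi -/(dotv cstar xhat) /cstar Daf; by rewrite subrr.
  + move=> i; rewrite sumdot rowA; case: (i == istar); first by rewrite Daf.
    rewrite /a_g; case: ifP => h; first by rewrite Daf.
    by rewrite leNgt h.
  + by rewrite /pi_star (bigD1 istar) //= eqxx big1 ?addr0 // => i /negbTE ->.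
  + move=> j; rewrite /pi_star sum_pi /Astar /A_star mxE eqxx.
    by rewrite /cstar.
  + by move=> i; rewrite /pi_star ler0n.
- rewrite /nlosd_obj (bigD1 istar) //= rowA eqxx Oaf; congr (_ + _).
  apply: eq_bigr => i /negbTE hi; rewrite rowA hi /a_g /g_val.
  case: ifP => h; first by rewrite Oaf.
  by rewrite subrr (@nN0 _ _ _ hN) mulr0.
- move=> A c pi [h1 h2 h3 h4 h5].
  have h2' i : b i <= dotv (row i A) xhat by rewrite -sumdot.
  have hs : \sum_i pi i * (dotv (row i A) xhat - b i) = 0.
    have e1 : \sum_i pi i * dotv (row i A) xhat = \sum_(j < n) c 0 j * xhat 0 j.
      rewrite /dotv; under eq_bigr do rewrite mulr_sumr.
      rewrite exchange_big; apply: eq_bigr => j _; rewrite -h4 mulr_suml.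
      apply: eq_bigr => i _; rewrite mxE; ring.
    have e2 : \sum_i pi i * (dotv (row i A) xhat - b i) =
      \sum_i pi i * dotv (row i A) xhat - \sum_i b i * pi i.
      rewrite -sumrB; apply: eq_bigr => i _; ring.
    by rewrite e2 e1.
  have hge i : (fun i => true) i -> 0 <= pi i * (dotv (row i A) xhat - b i).
    by move=> _; rewrite mulr_ge0 // subr_ge0.
  have hz := psumr_eq0P hge hs.
  have [k hk] : exists k, pi k != 0.
    case: (pickP (fun k => pi k != 0)) => [k hk|hnone]; first by exists k.
    move: h3; rewrite big1 => [/esym/eqP|i _]; first by rewrite oner_eq0.
    by have := hnone i => /negbFE/eqP.
  have hk2 : dotv (row k A) xhat = b k.
    have /eqP := hz k isT; rewrite mulf_eq0 (negbTE hk) /= subr_eq0.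
    by move/eqP.
  have hG : forall s : 'I_m, \sum_(i < m | i != s) g_val xi b Ahat xhat v i
     = \sum_i g_val xi b Ahat xhat v i - g_val xi b Ahat xhat v s.
    by move=> s; rewrite [in RHS](bigD1 s) //=; ring.
  rewrite /nlosd_obj (bigD1 k) //=.
  have e1 := Lf _ _ hk2.
  have e2 : \sum_(i < m | i != k) g_val xi b Ahat xhat v i <=
      \sum_(i < m | i != k) xi i * N (row i A - row i Ahat).
    by apply: ler_sum => i _; apply: Lg.
  have := hmin k. rewrite /V hG. rewrite hG in e2. lra.
- move=> hb hA; have hc : forall z, dotv z xhat = b istar -> z != 0.
    move=> z hz; apply/eqP => e; move: hz; rewrite e dotvC dotv0r => /esym/eqP.
    by rewrite (negbTE (hb istar)).
  split; first by apply: hc; apply: Daf.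
  move=> i; rewrite rowA; case: (i == istar) ; last rewrite /a_g; last case: ifP => _ //.
  + apply/eqP => e; have := Daf i; rewrite e dotvC dotv0r => /esym/eqP.
    by rewrite (negbTE (hb i)).
  + apply/eqP => e; have := Daf i; rewrite e dotvC dotv0r => /esym/eqP.
    by rewrite (negbTE (hb i)).
Qed.
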